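(* Let $Q=(q_n)_{n\ge1}$ be a basic sequence that is infinite in limit and grows slowly, i.e. there is a constant $M$ with $\omega_n\le M$ for all $n\ge1$. Then $\dim_H\Theta_Q=\dim_B\Theta_Q=0$ (in particular the box-counting dimension of $\Theta_Q$ exists).
   Context: A basic sequence is a sequence $Q=(q_n)_{n\ge1}$ of integers with $q_n\ge 2$; it is infinite in limit if $q_n\to\infty$. $\mathbb{N}$ denotes the positive integers. For each positive integer $j$ let $\nu_j=\min\{N : q_m\ge 2j^2 \text{ for all } m\ge N\}$. Define $l_1=\max(\nu_2-1,1)$ and, recursively for $i\ge 2$, $l_i=\max\big(\min\{k\in\mathbb{N} : l_1+2l_2+\cdots+(i-1)l_{i-1}+ik\ge \nu_{i+1}-1\},1\big)$. Put $L_i=\sum_{j=1}^i jl_j$ (with $L_0=0$). Let $S_Q=\{(a,b,c)\in\mathbb{N}^3 : b\le l_a,\ c\le a\}$ and $\phi_Q(a,b,c)=L_{a-1}+(b-1)a+c$; $\phi_Q$ is a bijection $S_Q\to\mathbb{N}$. A $Q$-special sequence is a family of integers $F=(F_{(a,b,c)})_{(a,b,c)\in S_Q}$ with $F_{(a,b,1)}=0$ for all $(a,b,1)\in S_Q$ and $\frac{F_{(a,b,c)}}{q_{\phi_Q(a,b,c)}}\in\left[\frac{c-1}{a}-\frac{1}{2a^2},\frac{c-1}{a}+\frac{1}{2a^2}\right]$ for $(a,b,c)\in S_Q$ with $c>1$. Let $\Gamma_Q$ be the set of $Q$-special sequences. For $F\in\Gamma_Q$ put $E_{F,n}=F_{\phi_Q^{-1}(n)}$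 and $x_F=\sum_{n=1}^\infty \frac{E_{F,n}}{q_1q_2\cdots q_n}$. Define $\Theta_Q=\{x_F : F\in\Gamma_Q\}\subseteq[0,1)$ and $\omega_n=\#\{E_{F,n} : F\in\Gamma_Q\}$. $\dim_H$ denotes Hausdorff dimension. For nonempty $J\subseteq[0,1)$, let $C_\delta(J)$ be the smallest number of sets of diameter at most $\delta$ covering $J$; the box-counting dimension is $\dim_B J=\lim_{\delta\to0}\frac{\log C_\delta(J)}{-\log\delta}$ when this limit exists. *)

(* Defs.v *)
From HB Require Import structures.
From mathcomp Require Import all_boot all_order all_algebra.
From mathcomp Require Import all_classical all_reals all_analysis.
Set Implicit Arguments. Unset Strict Implicit. Unset Printing Implicit Defensive.
Import Order.TTheory GRing.Theory Num.Theory.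
Import numFieldNormedType.Exports.
Local Open Scope classical_set_scope.
Local Open Scope ring_scope.

(* least natural number satisfying P (0 if none; all uses below are on
   nonempty sets) *)
Definition minnat (P : nat -> Prop) : nat :=
  match pselect (exists n, P n) with
  | left h => @ex_minn (fun n => `[< P n >])
       (let: ex_intro n hn := h in ex_intro _ n (asboolT hn))
  | right _ => 0%N
  end.

Section Cantor.
Variable q : nat -> nat.  (* q n = q_n for n >= 1; q 0 is irrelevant *)

Definition nu (j : nat) : nat :=
  minnat (fun N => (0 < N)%N /\ forall m, (N <= m)%N -> (2 * j ^ 2 <= q m)%N).

Fixpoint lL (i : nat) : nat * nat :=
  match i with
  | 0 => (0, 0)%N
  | i'.+1 =>
      let Lp := (lL i').2 in
      let li := if i' == 0%N then maxn (nu 2 - 1) 1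
                else maxn (minnat (fun k => (0 < k)%N /\
                                    (nu i'.+2 - 1 <= Lp + i'.+1 * k)%N)) 1 in
      (li, Lp + i'.+1 * li)%N
  end.

Definition ll (i : nat) : nat := (lL i).1.
Definition LL (i : nat) : nat := (lL i).2.

Definition inS (t : nat * nat * nat) : Prop :=
  let: (a, b, c) := t in
  [/\ (0 < a)%N, (0 < b)%N, (0 < c)%N, (b <= ll a)%N & (c <= a)%N].

Definition phi (t : nat * nat * nat) : nat :=
  let: (a, b, c) := t in (LL a.-1 + b.-1 * a + c)%N.

Definition phi_inv (n : nat) : nat * nat * nat :=
  xget (0, 0, 0)%N [set t | inS t /\ phi t = n].

Variable R : realType.

(* Q-special sequences: families F indexed by S_Q (values off S_Q unused) *)
Definition special (F : nat -> nat -> nat -> int) : Prop :=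
  forall a b c, inS (a, b, c) ->
    if c == 1%N then F a b c = 0
    else let r := (F a b c)%:~R / (q (phi (a, b, c)))%:R : R in
         let mid := (c.-1)%:R / a%:R : R in
         mid - 1 / (2 * a%:R ^+ 2) <= r <= mid + 1 / (2 * a%:R ^+ 2).

Definition Gamma : set (nat -> nat -> nat -> int) := [set F | special F].

Definition EF (F : nat -> nat -> nat -> int) (n : nat) : int :=
  let: (a, b, c) := phi_inv n in F a b c.

Definition xF (F : nat -> nat -> nat -> int) : R :=
  limn (fun N => \sum_(1 <= n < N) ((EF F n)%:~R / \prod_(1 <= k < n.+1) (q k)%:R : R)).

Definition Theta : set R := [set xF F | F in Gamma].

(* the set {E_{F,n} : F in Gamma_Q}, whose cardinality is omega_n *)
Definition Evals (n : nat) : set int := [set EF F n | F in Gamma].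

End Cantor.
Arguments Theta : clear implicits.

Section Dimensions.
Variable R : realType.

(* diameter of a subset of R (-oo for the empty set, +oo if unbounded) *)
Definition diam (A : set R) : \bar R :=
  ereal_sup [set (`|x - y|)%:E | x in A & y in A].

Definition diam_pow (s : R) (U : set R) : \bar R :=
  if pselect (U = set0) then 0%E else ((fine (diam U)) `^ s)%:E.

Definition hausdorff_delta (s d : R) (J : set R) : \bar R :=
  ereal_inf [set (\sum_(0 <= i <oo) diam_pow s (U i))%E | U in
     [set U : nat -> set R | J `<=` \bigcup_i U i /\
                             forall i, (diam (U i) <= d%:E)%E]].

(* H^s(J) = lim_{delta -> 0} H^s_delta(J); as H^s_delta is nonincreasing in
   delta this limit is the supremum over delta > 0 *)
Definition hausdorff_measure (s : R) (J : set R) : \bar R :=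
  ereal_sup [set hausdorff_delta s d J | d in [set d : R | 0 < d]].

Definition hausdorff_dim (J : set R) : \bar R :=
  ereal_inf [set s%:E | s in [set s : R | 0 <= s /\ hausdorff_measure s J = 0%E]].

Definition box_count (d : R) (J : set R) : \bar R :=
  ereal_inf [set (n%:R)%:E | n in [set n : nat | exists U : nat -> set R,
     J `<=` \bigcup_(i in `I_n) U i /\
     forall i, (i < n)%N -> (diam (U i) <= d%:E)%E]].

Definition has_box_dim (J : set R) (D : R) : Prop :=
  (\forall d \near 0^'+, (box_count d J < +oo)%E) /\
  (fun d => ln (fine (box_count d J)) / - ln d) @ 0^'+ --> D.

End Dimensions.

(* Main.v *)
Require Import Defs.
From HB Require Import structures.
From mathcomp Require Import all_boot all_order all_algebra.
From mathcomp Require Import all_classical all_reals all_analysis.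
Import Order.TTheory GRing.Theory Num.Theory.
Import numFieldNormedType.Exports.
Local Open Scope classical_set_scope.
Local Open Scope ring_scope.
From mathcomp Require Import ring lra zify.

Lemma spec_real (R : realType) (A C x : R) : 1 <= A -> 1 <= C -> C <= A - 1 ->
  C / A - 1 / (2 * A ^+ 2) <= x <= C / A + 1 / (2 * A ^+ 2) -> 0 <= x /\ x < 1.
Proof.
move=> A1 C1 CA /andP[xl xu].
have A0 : 0 < A by lra.
have e1 : C / A = C * A^-1 by [].
have e2 : 1 / (2 * A ^+ 2) = A^-1 * A^-1 / 2.
  by rewrite expr2; field; rewrite gt_eqF.
have Au : A * A^-1 = 1 by rewrite mulfV // gt_eqF.
have u0 : 0 < A^-1 by rewrite invr_gt0.
have u1 : A^-1 <= 1 by rewrite invr_le1 // ?unitfE ?gt_eqF //; lra.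
rewrite e2 in xl xu.
have h1 : C * A^-1 <= (A - 1) * A^-1 by rewrite ler_pM2r.
have h2 : 1 * A^-1 <= C * A^-1 by rewrite ler_pM2r.
have h3 : A^-1 * A^-1 <= 1 * A^-1 by rewrite ler_pM2r.
rewrite mulrBl Au in h1.
split; lra.
Qed.

Lemma EF_bound (R : realType) (q : nat -> nat) (M : nat) (g : nat -> int) F n :
  (forall n, (0 < n)%N -> (2 <= q n)%N) -> (0 < n)%N ->
  Evals q R n `<=` g @` `I_M -> special q R F ->
  (0 <= EF q F n)%R /\ (EF q F n < (q n)%:Z)%R.
Proof.
move=> hq n0 Eg hF.
have qn2 := hq n n0.
rewrite /EF /phi_inv.
case: xgetP => [t tE [St Pt] | Nx].
  case: t tE St Pt => [[a b] c] tE St Pt.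
  have := hF a b c St.
  case: eqP => [_ -> | c1]; first by split => //; rewrite ltz_nat; lia.
  rewrite Pt /=.
  move: St => [a0 b0 c0 bl ca] /=.
  have Q0 : (0 : R) < (q n)%:R by rewrite ltr0n; lia.
  set x := ((F a b c)%:~R / _) => hx.
  have [x0 x1] : 0 <= x /\ x < 1.
    apply: (@spec_real R a%:R c.-1%:R x) => //.
    - by rewrite ler1n.
    - by rewrite ler1n; lia.
    - by rewrite lerBrDr natr1 ler_nat; lia.
  split.
    have : (0 : R) <= (F a b c)%:~R by move: x0; rewrite /x pmulr_lge0 ?invr_gt0.
    by rewrite ler0z.
  have : (F a b c)%:~R < ((q n)%:R : R).
    by move: x1; rewrite /x ltr_pdivrMr // mul1r.
  by rewrite -[X in _ < X]/(((q n)%:Z)%:~R) ltr_int.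
exfalso.
set v : int := ((\max_(j < M) `|g j|%N)%N)%:Z + 1.
pose F' := fun a b c => if a == 0%N then v else F a b c.
have hF' : special q R F'.
  move=> a b c St; rewrite /F'; have := hF a b c St.
  by case: St => a0 _ _ _ _; rewrite (gtn_eqF a0).
have : Evals q R n v.
  exists F' => //; rewrite /EF /phi_inv (xgetPN _ Nx) /F' //.
move=> /Eg [j jM gj].
have : (`|g j|%N <= \max_(j < M) `|g j|%N)%N.
  exact: (@leq_bigmax _ (fun j : 'I_M => `|g (nat_of_ord j)|%N) (Ordinal jM)).
have := ler_norm (g j).
rewrite gj /v; lia.
Qed.

Definition PP (R : realType) (q : nat -> nat) (n : nat) : R :=
  \prod_(1 <= k < n.+1) (q k)%:R.
Definition SS (R : realType) (q : nat -> nat) F (N : nat) : R :=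
  \sum_(1 <= n < N) ((EF q F n)%:~R / PP R q n).

Lemma PP0 R q : PP R q 0 = 1.
Proof. by rewrite /PP big_geq. Qed.

Lemma PPS R q n : PP R q n.+1 = PP R q n * (q n.+1)%:R.
Proof. by rewrite /PP big_nat_recr. Qed.

Lemma PP_ge1 R q n : (forall n, (0 < n)%N -> (2 <= q n)%N) -> 1 <= PP R q n.
Proof.
move=> hq; elim: n => [|n IH]; first by rewrite PP0.
rewrite PPS; have : (1 : R) <= (q n.+1)%:R by rewrite ler1n; have := hq n.+1; lia.
move=> h; rewrite -[1]mulr1; apply: ler_pM => //; lra.
Qed.

Lemma SS_le_S R q F n (hq : forall n, (0 < n)%N -> (2 <= q n)%N)
  (hE : forall n, (0 < n)%N -> (0 <= EF q F n)%R /\ (EF q F n < (q n)%:Z)%R) :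
  SS R q F n <= SS R q F n.+1.
Proof.
case: n => [|n]; first by rewrite /SS !big_geq.
rewrite /SS [X in _ <= X]big_nat_recr //= lerDl.
have [e0 _] := hE n.+1 isT.
apply: divr_ge0; first by rewrite ler0z.
by have := PP_ge1 R q n.+1 hq; apply: le_trans.
Qed.

Lemma SS_tail R q F (hq : forall n, (0 < n)%N -> (2 <= q n)%N)
  (hE : forall n, (0 < n)%N -> (0 <= EF q F n)%R /\ (EF q F n < (q n)%:Z)%R) N K :
  SS R q F N.+1 <= SS R q F (N.+1 + K) <=
  SS R q F N.+1 + 1 / PP R q N - 1 / PP R q (N + K).
Proof.
elim: K => [|K /andP[IH1 IH2]]; first by rewrite !addn0 lexx /= addrK.
apply/andP; split.
  by apply: (le_trans IH1); rewrite addnS; exact: SS_le_S.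
rewrite addnS {1}/SS big_nat_recr //= -/(SS R q F (N.+1 + K)).
set m := (N.+1 + K)%N.
have [e0 e1] := hE m isT.
have Pm1 := PP_ge1 R q (N + K) hq.
have qm : (1 : R) <= (q m)%:R by rewrite ler1n; have := hq m isT; lia.
have e1' : ((EF q F m)%:~R : R) <= (q m)%:R - 1.
  have : (EF q F m + 1 <= (q m)%:Z)%R by rewrite lezD1.
  rewrite -(ler_int R) rmorphD /= => h; rewrite lerBrDr; exact: h.
have PmE : PP R q m = PP R q (N + K) * (q m)%:R by rewrite /m addSn PPS.
have -> : (N + K.+1 = m)%N by rewrite /m addnS addSn.
rewrite PmE.
have t1 : (EF q F m)%:~R / (PP R q (N + K) * (q m)%:R) <=
          ((q m)%:R - 1) / (PP R q (N + K) * (q m)%:R).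
  by rewrite ler_pM2r // invr_gt0 mulr_gt0 //; apply: (lt_le_trans _ qm) || apply: (lt_le_trans _ Pm1).
have t2 : ((q m)%:R - 1) / (PP R q (N + K) * (q m)%:R) =
          1 / PP R q (N + K) - 1 / (PP R q (N + K) * (q m)%:R).
  by field; apply/andP; split; rewrite gt_eqF //; [apply: (lt_le_trans _ qm) | apply: (lt_le_trans _ Pm1)].
move: IH2; rewrite t2 in t1; lra.
Qed.

Lemma xF_bound R q F (hq : forall n, (0 < n)%N -> (2 <= q n)%N)
  (hE : forall n, (0 < n)%N -> (0 <= EF q F n)%R /\ (EF q F n < (q n)%:Z)%R) N :
  SS R q F N.+1 <= xF q R F <= SS R q F N.+1 + 1 / PP R q N.
Proof.
have mono : nondecreasing_seq (SS R q F).
  by apply/nondecreasing_seqP => n; exact: SS_le_S.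
have bnd : has_ubound (range (SS R q F)).
  exists 1 => _ [n _ <-].
  apply: (le_trans (mono n (1 + n)%N _)); first by rewrite leq_addl.
  have /andP[_ h] := SS_tail R q F hq hE 0 n.
  apply: (le_trans h); rewrite /SS big_geq // PP0 add0r divr1 lerBlDr lerDl.
  by apply: divr_ge0 => //; apply: (le_trans _ (PP_ge1 R q n hq)).
have cv := nondecreasing_is_cvgn mono bnd.
change (xF q R F) with (limn (SS R q F)).
apply/andP; split.
  apply: limr_ge => //; exists N.+1 => // n /= Nn.
  by rewrite -(subnKC Nn); have /andP[h _] := SS_tail R q F hq hE N (n - N.+1).
apply: limr_le => //; exists N.+1 => // n /= Nn.
rewrite -(subnKC Nn); have /andP[_ h] := SS_tail R q F hq hE N (n - N.+1).
apply: (le_trans h); rewrite lerBlDr lerDl.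
by apply: divr_ge0 => //; apply: (le_trans _ (PP_ge1 R q _ hq)).
Qed.

Fixpoint cc (R : realType) (q : nat -> nat) (g : nat -> nat -> int) (B : nat)
  (N i : nat) : R :=
  match N with
  | 0 => 0
  | N'.+1 => cc R q g B N' (i %/ B)%N + (g N (i %% B)%N)%:~R / PP R q N
  end.

Lemma SS_cc R q g B F :
  (forall n, (0 < n)%N -> forall v, Evals q R n v -> exists2 j, (j < B)%N & g n j = v) ->
  special q R F -> forall N, exists2 i, (i < B ^ N)%N & SS R q F N.+1 = cc R q g B N i.
Proof.
move=> hg hF; elim => [|N [i iB Si]]; first by exists 0%N => //; rewrite /SS big_geq.
have [j jB gj] := hg N.+1 isT (EF q F N.+1) (ex_intro2 _ _ F hF erefl).
have B0 : (0 < B)%N by case: (B) jB.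
exists (i * B + j)%N.
  rewrite expnSr; have := leq_mul iB (leqnn B); rewrite mulSn; lia.
rewrite /SS big_nat_recr //= -/(SS R q F N.+1) Si.
by rewrite divnMDl // divn_small // addn0 modnMDl modn_small // gj.
Qed.

Definition LP (R : realType) (q : nat -> nat) (n : nat) : R :=
  \sum_(1 <= k < n.+1) ln ((q k)%:R : R).

Lemma LPS R q n : LP R q n.+1 = LP R q n + ln (q n.+1)%:R.
Proof. by rewrite /LP big_nat_recr. Qed.

Lemma LP_ge0 R q n : (forall n, (0 < n)%N -> (2 <= q n)%N) -> 0 <= LP R q n.
Proof.
move=> hq; rewrite /LP big_nat_cond; apply: sumr_ge0 => k /andP[/andP[k1 _] _].
by apply: ln_ge0; rewrite ler1n; have := hq k k1; lia.
Qed.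

Lemma PP_LP R q n : (forall n, (0 < n)%N -> (2 <= q n)%N) -> PP R q n = expR (LP R q n).
Proof.
move=> hq; elim: n => [|n IH]; first by rewrite PP0 /LP big_geq // expR0.
rewrite PPS LPS expRD -IH lnK // posrE ltr0n; have := hq n.+1; lia.
Qed.

Lemma LP_grow (R : realType) q : (forall n, (0 < n)%N -> (2 <= q n)%N) ->
  (forall K, exists N, forall n, (N <= n)%N -> (K <= q n)%N) ->
  forall A : R, exists N0, forall N, (N0 <= N)%N -> A * N%:R <= LP R q N.
Proof.
move=> hq hinf A.
have [A0|A0] := lerP A 0.
  exists 0%N => N _; apply: (le_trans _ (LP_ge0 R q N hq)).
  by rewrite mulr_le0_ge0.
pose K := (Num.truncn (expR (2 * A))).+1.
have K0 : (0 < K)%N by [].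
have lnK2 : 2 * A <= ln (K%:R : R).
  rewrite -[X in X <= _]expRK ler_ln ?posrE ?expR_gt0 ?ltr0n //.
  exact/ltW/truncnS_gt.
have [N1 hN1] := hinf K.
pose N2 := N1.+1.
have cl : forall m, m%:R * (2 * A) <= LP R q (N2 + m).
  elim => [|m IH]; first by rewrite mul0r LP_ge0.
  rewrite addnS LPS -natr1 mulrDl mul1r; apply: lerD => //.
  apply: (le_trans lnK2); rewrite ler_ln ?posrE ?ltr0n ?ler_nat //.
    by apply: hN1; rewrite /N2; lia.
  have := hq (N2 + m).+1 isT; lia.
exists (2 * N2)%N => N HN.
rewrite -(subnKC (_ : (N2 <= N)%N)); last by lia.
apply: le_trans (cl _).
rewrite subnKC; last by lia.
have : (N%:R : R) <= 2 * (N - N2)%:R.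
  by rewrite -[2]/(2%:R) -natrM ler_nat; lia.
move=> h; nra.
Qed.

Lemma card_to_g (R : realType) q M n : (Evals q R n #<= `I_M)%card ->
  exists g : nat -> int, Evals q R n `<=` g @` `I_M.
Proof.
move=> /pcard_leP /injfunPex [f ff fi].
exists (fun j => xget 0%Z [set v | Evals q R n v /\ f v = j]) => v Ev.
exists (f v); first exact: ff.
case: xgetP => [w -> [Ew fw] | Nx]; first by apply: fi; rewrite ?inE.
by exfalso; apply: (Nx v).
Qed.

Lemma cover R q M (G : nat -> nat -> int) x N :
  (forall n, (0 < n)%N -> (2 <= q n)%N) ->
  (forall n, (0 < n)%N -> Evals q R n `<=` G n @` `I_M) ->
  Theta q R x ->
  exists2 i, (i < M.+1 ^ N)%N &
    cc R q G M.+1 N i <= x <= cc R q G M.+1 N i + 1 / PP R q N.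
Proof.
move=> hq hG [F hF <-].
have hE : forall n, (0 < n)%N -> (0 <= EF q F n)%R /\ (EF q F n < (q n)%:Z)%R.
  by move=> n n0; exact: (@EF_bound R q M (G n) F n hq n0 (hG n n0) hF).
have hg : forall n, (0 < n)%N -> forall v, Evals q R n v ->
    exists2 j, (j < M.+1)%N & G n j = v.
  move=> n n0 v /(hG n n0) [j jM <-]; exists j => //; rewrite /= in jM; lia.
have [i iB Si] := @SS_cc R q G M.+1 F hg hF N.
exists i => //; rewrite -Si; exact: (@xF_bound R q F hq hE N).
Qed.

Lemma diam_le (R : realType) (U : set R) (w : R) :
  (forall x y, U x -> U y -> `|x - y| <= w) -> (diam U <= w%:E)%E.
Proof.
move=> h; apply: ge_ereal_sup => _ [x Ux [y Uy <-]]; rewrite lee_fin; exact: h.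
Qed.

Lemma diam_ge0 (R : realType) (U : set R) x : U x -> (0 <= diam U)%E.
Proof.
move=> Ux; apply: ereal_sup_ubound; exists x => //; exists x => //.
by rewrite subrr normr0.
Qed.

Lemma itv_diam (R : realType) (a w : R) :
  forall x y, (fun z => a <= z <= a + w) x -> (fun z => a <= z <= a + w) y -> `|x - y| <= w.
Proof.
move=> x y /andP[x1 x2] /andP[y1 y2]; rewrite ler_norml; apply/andP; split; lra.
Qed.

Lemma diam_pow_le (R : realType) (s w : R) (U : set R) :
  0 < s -> 0 <= w -> (diam U <= w%:E)%E -> (diam_pow s U <= (w `^ s)%:E)%E.
Proof.
move=> s0 w0 dU; rewrite /diam_pow; destruct (pselect (U = set0)) as [U0'|U0].
  by rewrite lee_fin powR_ge0.
have [x Ux] : exists x, U x.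
  by apply: contra_notP U0 => h; apply/seteqP; split => // y Uy; apply: h; exists y.
have d0 := @diam_ge0 R U x Ux; move: (diam U) dU d0 => [r| |] //= rw r0.
rewrite !lee_fin in rw r0 *; apply: ge0_ler_powR; rewrite ?nnegrE //; lra.
Qed.

Lemma choose_N (R : realType) (q : nat -> nat) (A x y : R) :
  (forall n, (0 < n)%N -> (2 <= q n)%N) ->
  (forall K, exists N, forall n, (N <= n)%N -> (K <= q n)%N) ->
  exists N, [/\ A * N%:R <= LP R q N, x <= N%:R & y <= N%:R].
Proof.
move=> hq hinf; have [N0 hN0] := @LP_grow R q hq hinf A.
pose N := maxn N0 (maxn (Num.truncn x).+1 (Num.truncn y).+1).
exists N; split.
- by apply: hN0; rewrite /N leq_maxl.
- by apply: (le_trans (ltW (truncnS_gt x))); rewrite ler_nat /N !leq_max leqnn !orbT.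
- by apply: (le_trans (ltW (truncnS_gt y))); rewrite ler_nat /N !leq_max leqnn !orbT.
Qed.

Lemma natrX_exp (R : realType) (B N : nat) : (0 < B)%N ->
  ((B ^ N)%N%:R : R) = expR (ln (B%:R : R) *+ N).
Proof.
move=> B0; rewrite -lnXn ?ltr0n // lnK ?natrX // posrE exprn_gt0 // ltr0n //.
Qed.

Lemma w_pow (R : realType) (L s : R) : (expR (- L)) `^ s = expR (- (s * L)).
Proof. by rewrite /powR gt_eqF ?expR_gt0 // expRK mulrN. Qed.

Definition UU (R : realType) q (G : nat -> nat -> int) (B N : nat) (i : nat) : set R :=
  if (i < B ^ N)%N then [set z | cc R q G B N i <= z <= cc R q G B N i + 1 / PP R q N]
  else set0.

Lemma UU_diam (R : realType) q G B N i : (diam (UU R q G B N i) <= (1 / PP R q N)%:E)%E.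
Proof.
apply: diam_le => x y; rewrite /UU; case: ifP => _ //; exact: itv_diam.
Qed.

Lemma UU_cover (R : realType) q M G N x :
  (forall n, (0 < n)%N -> (2 <= q n)%N) ->
  (forall n, (0 < n)%N -> Evals q R n `<=` G n @` `I_M) ->
  Theta q R x -> exists2 i, (i < M.+1 ^ N)%N & UU R q G M.+1 N i x.
Proof.
move=> hq hG Tx; have [i iB hi] := @cover R q M G x N hq hG Tx.
by exists i => //; rewrite /UU iB.
Qed.

Lemma w_eq (R : realType) q N : (forall n, (0 < n)%N -> (2 <= q n)%N) ->
  1 / PP R q N = expR (- LP R q N).
Proof. by move=> hq; rewrite (PP_LP R q N hq) expRN div1r. Qed.

Lemma hdelta_small (R : realType) q M G s d e :
  (forall n, (0 < n)%N -> (2 <= q n)%N) ->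
  (forall K, exists N, forall n, (N <= n)%N -> (K <= q n)%N) ->
  (forall n, (0 < n)%N -> Evals q R n `<=` G n @` `I_M) ->
  0 < s -> 0 < d -> 0 < e -> (hausdorff_delta s d (Theta q R) <= e%:E)%E.
Proof.
move=> hq hinf hG s0 d0 e0.
set B := M.+1.
set L := ln (B%:R : R).
have L0 : 0 <= L by apply: ln_ge0; rewrite ler1n.
set A := (L + 1) / s + 1.
have [N [hA hNe hNd]] := @choose_N R q A (- ln e) (- ln d) hq hinf.
set w := 1 / PP R q N.
have wE : w = expR (- LP R q N) by exact: w_eq.
have A1 : 1 <= A by rewrite /A lerDr divr_ge0 //; [lra | exact: ltW].
have N0 : (0 : R) <= N%:R by [].
have LPN : N%:R <= LP R q N by apply: le_trans hA; rewrite ler_peMl.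
have wd : w <= d.
  by rewrite wE -[d]lnK ?posrE // ler_expR; lra.
apply: ge_ereal_inf.
exists (\sum_(0 <= i <oo) diam_pow s (UU R q G B N i))%E.
  exists (UU R q G B N) => //; split.
    move=> x Tx; have [i _ hi] := @UU_cover R q M G N x hq hG Tx.
    by exists i.
  by move=> i; apply: (le_trans (UU_diam R q G B N i)); rewrite lee_fin.
have dp0 : forall i, (0 <= diam_pow s (UU R q G B N i))%E.
  move=> i; rewrite /diam_pow; destruct (pselect _) => //.
  by rewrite lee_fin powR_ge0.
rewrite (nneseries_split 0 (B ^ N)) // add0n.
rewrite (eseries0 (N := (B ^ N)%N)) ?adde0; last first.
  move=> i iB _; rewrite /diam_pow /UU ltnNge iB /=.
  by destruct (pselect _) as [|h] => //; exfalso; apply: h.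
apply: (@le_trans _ _ (\sum_(0 <= i < B ^ N) (w `^ s)%:E)%E).
  apply: lee_sum => i _; apply: diam_pow_le => //.
    by rewrite wE expR_ge0.
  exact: UU_diam.
rewrite sumEFin sumr_const_nat subn0 lee_fin.
rewrite -mulr_natl natrX_exp // wE w_pow -expRD -[e]lnK ?posrE // ler_expR.
have sA : s * A = L + 1 + s by rewrite /A mulrDr mulr1 mulrC divfK ?gt_eqF.
have h1 : s * (A * N%:R) <= s * LP R q N by rewrite ler_pM2l.
rewrite mulrA sA in h1.
have h2 : L *+ N = L * N%:R by rewrite mulr_natr.
rewrite h2; nra.
Qed.

Lemma ereal_le0 (R : realType) (x : \bar R) : (forall e : R, 0 < e -> (x <= e%:E)%E) -> (x <= 0)%E.
Proof.
case: x => [r| |] h //.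
  by rewrite lee_fin; apply/ler_addgt0Pr => e e0; rewrite add0r -lee_fin; exact: h.
by have := h 1 ltr01.
Qed.

Lemma hdelta_ge0 (R : realType) s d (J : set R) : (0 <= hausdorff_delta s d J)%E.
Proof.
apply: le_ereal_inf_tmp => _ [U _ <-]; apply: nneseries_ge0 => i _.
rewrite /diam_pow; destruct (pselect _) => //; by rewrite lee_fin powR_ge0.
Qed.

Lemma box_le (R : realType) q M G d N :
  (forall n, (0 < n)%N -> (2 <= q n)%N) ->
  (forall n, (0 < n)%N -> Evals q R n `<=` G n @` `I_M) ->
  1 / PP R q N <= d -> (box_count d (Theta q R) <= ((M.+1 ^ N)%N%:R)%:E)%E.
Proof.
move=> hq hG wd; apply: ge_ereal_inf; exists ((M.+1 ^ N)%N%:R)%:E => //.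
exists (M.+1 ^ N)%N => //; exists (UU R q G M.+1 N); split.
  move=> x Tx; have [i iB hi] := @UU_cover R q M G N x hq hG Tx.
  by exists i.
by move=> i _; apply: (le_trans (UU_diam R q G M.+1 N i)); rewrite lee_fin.
Qed.

Lemma box_ge1 (R : realType) d (J : set R) x : J x -> (1 <= box_count d J)%E.
Proof.
move=> Jx; apply: le_ereal_inf_tmp => _ [n [U [JU _]] <-].
have [i /= iI _] := JU x Jx.
by rewrite lee_fin ler1n; apply: (leq_ltn_trans (leq0n i) iI).
Qed.

Lemma box_empty (R : realType) d : box_count d (@set0 R) = 0%E.
Proof.
apply/eqP; rewrite eq_le; apply/andP; split.
  apply: ge_ereal_inf; exists 0%E => //; exists 0%N => //.
  by exists (fun _ => set0); split => // i.
by apply: le_ereal_inf_tmp => _ [n _ <-]; rewrite lee_fin.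
Qed.

Lemma LP_mono (R : realType) q m n : (forall n, (0 < n)%N -> (2 <= q n)%N) ->
  (m <= n)%N -> LP R q m <= LP R q n.
Proof.
move=> hq mn; rewrite -(subnKC mn); elim: (n - m)%N => [|k IH]; first by rewrite addn0.
rewrite addnS LPS; apply: (le_trans IH); rewrite lerDl.
by apply: ln_ge0; rewrite ler1n; have := hq (m + k).+1 isT; lia.
Qed.

Theorem mainTheorem6 (R : realType) (q : nat -> nat) :
  (forall n, (0 < n)%N -> (2 <= q n)%N) ->
  (forall K, exists N, forall n, (N <= n)%N -> (K <= q n)%N) ->
  (exists M : nat, forall n, (0 < n)%N -> (Evals q R n #<= `I_M)%card) ->
  hausdorff_dim (Theta q R) = 0%E /\ has_box_dim (Theta q R) 0.
Proof.
move=> hq hinf [M hM].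
have [G hG] : exists G : nat -> nat -> int,
    forall n, (0 < n)%N -> Evals q R n `<=` G n @` `I_M.
  have : forall n, exists g : nat -> int, (0 < n)%N -> Evals q R n `<=` g @` `I_M.
    move=> n; case: (posnP n) => [->|n0]; first by exists (fun _ => 0%Z).
    by have [g hg] := @card_to_g R q M n (hM n n0); exists g.
  by move/choice => [G hG]; exists G.
split.
  have Hs : forall s, 0 < s -> hausdorff_measure s (Theta q R) = 0%E.
    move=> s s0.
    have hd : forall d, 0 < d -> hausdorff_delta s d (Theta q R) = 0%E.
      move=> d d0; apply/eqP; rewrite eq_le hdelta_ge0 andbT.
      by apply: ereal_le0 => e e0; exact: (@hdelta_small R q M G s d e).
    apply/eqP; rewrite eq_le; apply/andP; split.
      by apply: ge_ereal_sup => _ [d d0 <-]; rewrite (hd d d0).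
    rewrite /hausdorff_measure; apply: ereal_sup_ubound; exists 1; first exact: ltr01.
    exact: hd.
  apply/eqP; rewrite eq_le; apply/andP; split.
    apply: ereal_le0 => e e0; apply: ereal_inf_lbound; exists e => //.
    by split; [exact: ltW | exact: Hs].
  by apply: le_ereal_inf_tmp => _ [s [s0 _] <-]; rewrite lee_fin.
set B := M.+1.
set L := ln (B%:R : R).
have L0 : 0 <= L by apply: ln_ge0; rewrite ler1n.
split.
  near=> d.
  have d0 : 0 < d by near: d; exact: nbhs_right_gt.
  have [N [h1 _ hNd]] := @choose_N R q 1 0 (- ln d) hq hinf.
  apply: (le_lt_trans (@box_le R q M G d N hq hG _)); last by rewrite ltey.
  rewrite w_eq // -[d]lnK ?posrE // ler_expR; rewrite mul1r in h1; lra.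
case: (pselect (Theta q R = set0)) => [T0|Tn].
  rewrite T0; apply: cvg_near_cst; near=> d.
  by rewrite box_empty /= ln0 // mul0r.
have [x Tx] : exists x, Theta q R x.
  by apply: contra_notP Tn => h; apply/seteqP; split => // y Ty; apply: h; exists y.
apply/cvgrPdist_le => e e0.
set A := 2 * L / e.
have [N0 hN0] := @LP_grow R q hq hinf A.
set N1 := N0.+1.
near=> d.
have d0 : 0 < d by near: d; exact: nbhs_right_gt.
have deta : d < expR (- LP R q N1) by near: d; apply: nbhs_right_lt; exact: expR_gt0.
have hd1 : LP R q N1 < - ln d.
  by move: deta; rewrite -[d]lnK ?posrE // ltr_expR lnK ?posrE //; lra.
have ex : exists n, (- ln d <= LP R q n).
  have [n [h1 _ h3]] := @choose_N R q 1 0 (- ln d) hq hinf.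
  by exists n; apply: (le_trans h3); rewrite mul1r in h1.
case: (@ex_minnP (fun n => - ln d <= LP R q n) ex) => N hN Nmin.
have N1N : (N1 < N)%N.
  rewrite ltnNge; apply/negP => NN1.
  by have := LP_mono R q N N1 hq NN1; lra.
have N'N0 : (N0 <= N.-1)%N by rewrite /N1 in N1N; lia.
have hN' : LP R q N.-1 < - ln d.
  rewrite ltNge; apply/negP => h; have := Nmin _ h; lia.
have hA := hN0 _ N'N0.
have bN := @box_le R q M G d N hq hG.
have bN' : (box_count d (Theta q R) <= ((B ^ N)%N%:R)%:E)%E.
  apply: bN; rewrite w_eq // -[d]lnK ?posrE // ler_expR; lra.
have b1 := @box_ge1 R d (Theta q R) x Tx.
move: bN' b1; case: (box_count d (Theta q R)) => [r||] //=; rewrite !lee_fin => rB r1.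
have lnr0 : 0 <= ln r by exact: ln_ge0.
have lnrB : ln r <= L *+ N.
  rewrite -lnXn ?ltr0n // -natrX ler_ln ?posrE ?ltr0n ?expn_gt0 //; lra.
have D0 : 0 < - ln d by have := LP_ge0 R q N1 hq; lra.
rewrite sub0r normrN ger0_norm; last by apply: divr_ge0 => //; exact: ltW.
rewrite ler_pdivrMr //.
have eA : e * A = 2 * L by rewrite /A mulrC divfK ?gt_eqF.
have h1 : e * (A * N.-1%:R) <= e * LP R q N.-1 by rewrite ler_pM2l.
rewrite mulrA eA in h1.
have N0' : (0 < N)%N by exact: (leq_ltn_trans (leq0n _) N1N).
have NE : (N%:R : R) = N.-1%:R + 1 by rewrite natr1 prednK.
have N'1 : (1 : R) <= N.-1%:R.
  by rewrite ler1n -ltnS prednK //; exact: (leq_ltn_trans (ltn0Sn N0) N1N).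
have h2 : L *+ N = L * N%:R by rewrite mulr_natr.
rewrite h2 NE in lnrB.
have h3 : 0 <= L * (N.-1%:R - 1) by apply: mulr_ge0 => //; rewrite subr_ge0.
have h4 : e * LP R q N.-1 <= e * - ln d by rewrite ler_pM2l //; exact: ltW.
apply: (le_trans lnrB); apply: (le_trans _ h4); apply: (le_trans _ h1).
rewrite -subr_ge0 (_ : _ - _ = L * (N.-1%:R - 1)) //.
by ring.
Unshelve. all: by end_near.
Qed.
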